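(* Let $r\ge1$ and let $m_1,\ldots,m_r\ge 2$ be integers. Then for every $n\ge 0$ the coefficient of $q^n$ in the power series $H_{(m_1,\ldots,m_r)}$ is divisible by $\prod_{t=1}^{r}\mathcal{M}(m_t,t)$.
   Context: For $m\ge2$, $U_m$ is the linear operator on $\mathbb{Z}[[q]]$ given by $U_m\big(\sum_{n\ge0}a(n)q^n\big)=\sum_{n\ge0}a(mn)q^n$. Define $H_{\emptyset}:=q/(1-q)$ and recursively $H_{(m_1,\ldots,m_r)}:=U_{m_r}\Big(\frac{1}{1-q}H_{(m_1,\ldots,m_{r-1})}\Big)$ for $r\ge1$. For positive integers $m,t$, $\mathcal{M}(m,t):=\dfrac{m}{\gcd\big(m,\operatorname{lcm}(1,2,\ldots,t)\big)}$. *)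

(* Defs.v *)
(* Formal power series in Z[[q]] are represented by their
   coefficient sequences  nat -> int. *)
From mathcomp Require Import all_boot all_order all_algebra.
Set Implicit Arguments. Unset Strict Implicit. Unset Printing Implicit Defensive.
Import GRing.Theory Num.Theory.

Definition pseries := nat -> int.

Definition Uop (m : nat) (f : pseries) : pseries := fun n => f (m * n)%N.

(* multiplication by 1/(1-q) = 1 + q + q^2 + ... : partial sums *)
Definition mul_geom (f : pseries) : pseries :=
  fun n => (\sum_(i < n.+1) f i)%R.

(* H_empty = q/(1-q) = q + q^2 + ... *)
Definition H_empty : pseries := fun n => if n == 0%N then 0%R else 1%R.

(* H_(m_1,...,m_r) = U_{m_r}( 1/(1-q) * H_(m_1,...,m_{r-1}) ) ;
   the list ms = [:: m_1; ...; m_r] is processed left to right. *)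
Definition H (ms : seq nat) : pseries :=
  foldl (fun h m => Uop m (mul_geom h)) H_empty ms.

Definition lcm_upto (t : nat) : nat := \big[lcmn/1%N]_(1 <= i < t.+1) i.

Definition Mfac (m t : nat) : nat := m %/ gcdn m (lcm_upto t).

(* Main.v *)
Require Import Defs.
From mathcomp Require Import all_boot all_order all_algebra.
From mathcomp Require Import ring.
Import GRing.Theory Num.Theory.
Local Open Scope ring_scope.

Fixpoint dk (k : nat) (f : pseries) (n : nat) : int :=
  match k with 0 => f n | k.+1 => dk k f n.+1 - dk k f n end.

Definition deg (d : nat) (f : pseries) := forall n, dk d.+1 f n = 0.

Lemma dk_ext k f g : (forall n, f n = g n) -> forall n, dk k f n = dk k g n.
Proof. move=> fg; elim: k => [|k IH] n //=; by rewrite !IH. Qed.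
Arguments dk_ext k {f g}.

Lemma dk_add a b f n : dk (a + b) f n = dk a (dk b f) n.
Proof. elim: a n => [|a IH] n //=; by rewrite !IH. Qed.

Lemma dk0 k n : dk k (fun _ => 0) n = 0.
Proof. elim: k n => [|k IH] n //=; by rewrite !IH subrr. Qed.

Lemma dk_shift k f n : dk k (fun i => f i.+1) n = dk k f n.+1.
Proof. elim: k n => [|k IH] n //=; by rewrite !IH. Qed.

Lemma dk_sum k (I : finType) (F : I -> pseries) n :
  dk k (fun i => \sum_(j : I) F j i) n = \sum_(j : I) dk k (F j) n.
Proof. elim: k n => [|k IH] n //=; by rewrite !IH -sumrB. Qed.

Lemma dk_scale k c f n : dk k (fun i => c * f i) n = c * dk k f n.
Proof. elim: k n => [|k IH] n //=; by rewrite !IH mulrBr. Qed.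

Lemma deg_mono d e f : (d <= e)%N -> deg d f -> deg e f.
Proof.
move=> de hf n; have -> : e.+1 = ((e - d) + d.+1)%N by rewrite addnS subnK.
by rewrite dk_add (dk_ext _ hf) dk0.
Qed.

Lemma dkS k f n : dk k.+1 f n = dk k (dk 1 f) n.
Proof. by rewrite -addn1 dk_add. Qed.

Lemma newtonK f N K : (N < K)%N ->
  f N = \sum_(k < K) ('C(N, k))%:R * dk k f 0%N.
Proof.
elim: N f K => [|N IH] f K hK.
  case: K hK => // K _; rewrite big_ord_recl bin0 mul1r /= big1 ?addr0 //.
  by move=> i _; rewrite bin0n /= mul0r.
case: K hK => // K hK.
have e : f N.+1 = f N + dk 1 f N by rewrite /= addrC subrK.
rewrite e (IH f K.+1) ?(ltn_trans _ hK) // (IH (dk 1 f) K.+1) ?(ltn_trans _ hK) //.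
rewrite [X in _ + X]big_ord_recr /= bin_small // mul0r addr0.
rewrite [in RHS]big_ord_recl [in LHS]big_ord_recl /= !bin0 -addrA -big_split /=.
congr (_ + _); apply: eq_bigr => i _.
rewrite /bump /= add1n binS natrD mulrDl; congr (_ + _).
by rewrite add0n; congr (_ * _); rewrite -[RHS]/(dk i.+1 f 0) dkS.
Qed.

Lemma dk_big d e f n : deg d f -> (d < e)%N -> dk e f n = 0.
Proof.
move=> hf de; have -> : e = ((e - d.+1) + d.+1)%N by rewrite subnK.
by rewrite dk_add (dk_ext _ hf) dk0.
Qed.

Lemma newton_deg d f : deg d f -> forall N,
  f N = \sum_(k < d.+1) ('C(N, k))%:R * dk k f 0%N.
Proof.
move=> hf N; rewrite (@newtonK f N (d.+1 + N)); last by rewrite addSn ltnS leq_addl.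
rewrite big_split_ord /= [X in _ + X]big1 ?addr0 // => i _.
have h0 := @dk_big d (d.+1 + i) f 0%N hf (leq_addr _ _); move: h0 => /= ->; by rewrite mulr0.
Qed.

Arguments newton_deg {d f}.

Lemma deg_binm m : forall k, deg k (fun n => ('C(m * n, k))%:R).
Proof.
move=> k; elim: k {-2}k (leqnn k) => [|K IH] k hk.
  move: hk; rewrite leqn0 => /eqP -> n /=; by rewrite !bin0 subrr.
move=> n; rewrite dkS.
have e : forall i, dk 1 (fun n => ('C(m * n, k))%:R) i =
   \sum_(j < k) ('C(m, k - j))%:R * ('C(m * i, j))%:R.
  move=> i /=; rewrite mulnS addnC -binomial.Vandermonde big_ord_recr /= subnn bin0 muln1.
  rewrite natrD addrK natr_sum; apply: eq_bigr => j _; by rewrite natrM mulrC.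
rewrite (dk_ext _ e) dk_sum big1 // => j _.
rewrite dk_scale (@dk_big j) ?mulr0 //.
apply: IH; rewrite -ltnS; exact: leq_trans (ltn_ord j) hk.
Qed.

Lemma lcm_upto_S t : lcm_upto t.+1 = lcmn (lcm_upto t) t.+1.
Proof. by rewrite /lcm_upto big_nat_recr. Qed.

Lemma lcm_upto_gt0 t : (0 < lcm_upto t)%N.
Proof.
elim: t => [|t IH]; first by rewrite /lcm_upto big_geq.
by rewrite lcm_upto_S lcmn_gt0 IH.
Qed.

Lemma dvd_lcm_upto t k : (0 < k <= t)%N -> (k %| lcm_upto t)%N.
Proof.
elim: t => [|t IH]; first by case: k => [|[]].
move=> /andP [k0]; rewrite leq_eqVlt => /orP [/eqP ->|hk].
  by rewrite lcm_upto_S dvdn_lcmr.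
rewrite lcm_upto_S; apply: dvdn_trans (dvdn_lcml _ _); apply: IH.
by rewrite k0 -ltnS.
Qed.

Lemma Mfac_dvd_bin m t k n : (0 < k <= t)%N -> (Mfac m t %| 'C(m * n, k))%N.
Proof.
case: k => // k hk; set L := lcm_upto t; set C := 'C(m * n, k.+1).
have h1 : (m %| L * C)%N.
  apply: dvdn_trans (_ : k.+1 * C %| L * C)%N; last first.
    by apply: dvdn_mul => //; apply: dvd_lcm_upto.
  by rewrite /C -mul_bin_diag -mulnA; apply: dvdn_mulr.
have h2 : (m %| gcdn m L * C)%N.
  by rewrite muln_gcdl dvdn_gcd h1 (dvdn_mulr _ (dvdnn m)).
have g0 : (0 < gcdn m L)%N by rewrite gcdn_gt0 lcm_upto_gt0 orbT.
rewrite /Mfac -/L -(@dvdn_pmul2l (gcdn m L)) // [X in (X %| _)%N]mulnC divnK ?dvdn_gcdl //.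
Qed.

Lemma divG m r (G : pseries) : G 0%N = 0 -> deg r G ->
  forall n, ((Mfac m r)%:Z %| G (m * n)%N)%Z.
Proof.
move=> G0 hG n; rewrite (newton_deg hG (m * n)).
apply: rpred_sum => -[[|k] hk] _ /=.
  by rewrite G0 mulr0 dvdz0.
apply: dvdz_mulr; rewrite natz dvdzE /=; apply: Mfac_dvd_bin.
by rewrite /= -ltnS.
Qed.

Lemma deg_comp m r G : deg r G -> deg r (fun n => G (m * n)%N).
Proof.
move=> hG n.
have e : forall i, G (m * i)%N = \sum_(k < r.+1) dk k G 0%N * ('C(m * i, k))%:R.
  by move=> i; rewrite (newton_deg hG); apply: eq_bigr => k _; rewrite mulrC.
rewrite (dk_ext _ e) dk_sum big1 // => k _.
by rewrite dk_scale (@dk_big k r.+1 _ n (deg_binm m k)) ?mulr0 // ltnS -ltnS.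
Qed.

Lemma deg_div d (A : int) g h : A != 0 -> (forall n, g n = A * h n) ->
  deg d g -> deg d h.
Proof.
move=> A0 e hg n; move: (hg n); rewrite (dk_ext _ e) dk_scale => /eqP.
by rewrite mulf_eq0 (negbTE A0) /= => /eqP.
Qed.

Lemma mul_geom0 h : mul_geom h 0%N = h 0%N.
Proof. by rewrite /mul_geom big_ord1. Qed.

Lemma deg_mulgeom r h : deg r h -> deg r.+1 (mul_geom h).
Proof.
move=> hr n; rewrite dkS.
have e : forall i, dk 1 (mul_geom h) i = h i.+1.
  by move=> i /=; rewrite /mul_geom [X in X - _]big_ord_recr /= addrC addrK.
by rewrite (dk_ext _ e) dk_shift hr.
Qed.

Lemma Mfac_gt0 m t : (0 < m)%N -> (0 < Mfac m t)%N.
Proof.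
move=> m0; rewrite /Mfac divn_gt0 ?gcdn_gt0 ?m0 //.
by apply: dvdn_leq => //; apply: dvdn_gcdl.
Qed.

Lemma step m r h : (0 < m)%N -> mul_geom h 0%N = 0 -> deg r.+1 (mul_geom h) ->
  exists h', h' 0%N = 0 /\ deg r.+1 h' /\
    forall n, Uop m (mul_geom h) n = (Mfac m r.+1)%:Z * h' n.
Proof.
move=> m0 G0 hG; set G := mul_geom h in G0 hG *; set A := (Mfac m r.+1)%:Z.
have dA : forall n, (A %| G (m * n)%N)%Z by apply: divG.
have e : forall n, G (m * n)%N = A * (G (m * n)%N %/ A)%Z.
  by move=> n; rewrite mulrC divzK.
exists (fun n => (G (m * n)%N %/ A)%Z); split; first by rewrite muln0 G0 div0z.
split; last by move=> n; rewrite /Uop -e.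
apply: (@deg_div _ A (fun n => G (m * n)%N)) => //; last exact: deg_comp.
by rewrite /A eqz_nat -lt0n Mfac_gt0.
Qed.

Definition Pr (s : seq nat) : nat := (\prod_(t < size s) Mfac (nth 0%N s t) t.+1)%N.

Lemma H_rcons s m n : H (rcons s m) n = Uop m (mul_geom (H s)) n.
Proof. by rewrite /H foldl_rcons. Qed.

Lemma Pr_rcons s m : Pr (rcons s m) = (Pr s * Mfac m (size s).+1)%N.
Proof.
rewrite /Pr size_rcons big_ord_recr /= nth_rcons ltnn eqxx; congr (_ * _)%N.
by apply: eq_bigr => i _; rewrite nth_rcons /= ltn_ord.
Qed.

Lemma main_inv s : (0 < size s)%N -> all (fun m => 2 <= m)%N s ->
  exists h, h 0%N = 0 /\ deg (size s) h /\ forall n, H s n = (Pr s)%:Z * h n.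
Proof.
elim/last_ind: s => // s m IH _; rewrite all_rcons => /andP [m2 hs].
have [g [g0 [hg eg]]] : exists g, g 0%N = 0 /\ deg (size s).+1 (mul_geom g) /\
    forall n, H s n = (Pr s)%:Z * g n.
  case: s IH hs {m2} => [|a s] IH hs.
    exists H_empty; split => //; split; last by move=> n; rewrite /Pr /= big_ord0 mul1r.
    have e : forall i, mul_geom H_empty i = i%:R.
      elim=> [|i IHi]; first by rewrite mul_geom0.
      by rewrite /mul_geom big_ord_recr /= -/(mul_geom _ _) IHi -natr1.
    by move=> n; rewrite (dk_ext _ e) /= -!natr1; ring.
  have [h [h0 [hh eh]]] := IH isT hs.
  exists h; split => //; split => //; exact: deg_mulgeom.
have m0 : (0 < m)%N by apply: leq_trans m2.
have [h' [h'0 [hh' eh']]] := @step m (size s) g m0 (etrans (mul_geom0 g) g0) hg.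
exists h'; split => //; rewrite size_rcons; split => // n.
rewrite H_rcons Pr_rcons PoszM -mulrA -eh' /Uop /mul_geom mulr_sumr.
by apply: eq_bigr => i _; rewrite eg.
Qed.

Theorem lemma2p8 (ms : seq nat) :
  (0 < size ms)%N ->
  all (fun m => 2 <= m)%N ms ->
  forall n : nat,
    (((\prod_(t < size ms) Mfac (nth 0%N ms t) t.+1)%N)%:Z %| H ms n)%Z.
Proof.
move=> s0 hs n; have [h [_ [_ e]]] := @main_inv ms s0 hs.
by rewrite -/(Pr ms) e dvdz_mulr.
Qed.
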